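(* For all integers $n\geq 3$ and $k\geq 2$, the digraph $M(n,k)$ is connected-homogeneous.
   Context: Connected-homogeneous: every isomorphism between finite induced subdigraphs whose underlying graphs are connected extends to an automorphism. Construction of $M(n,k)$: let $F=\langle a_1\rangle*\cdots*\langle a_n\rangle$ be the free product of $n$ cyclic groups of order $k$. Form the digraph $T^*$ with vertex set $F\times\{1,\dots,n\}$, arcs in both directions between $(v,i)$ and $(v,j)$ for all $v\in F$ and $i\ne j$ (a copy of $K_n$ for each $v$), and ''cycle arcs'' $(v,i)\to(va_i,i)$. Form the canonical double cover $T^*\otimes\vec K_2$: vertex set $V T^*\times\{-,+\}$, with an arc $(x,-)\to(y,+)$ whenever $x\to y$ in $T^*$. The cycle arcs $(v,i)\to(va_i,i)$ give arcs $((v,i),-)\to((va_i,i),+)$, which form a bijection between the two levels. $M(n,k)$ is obtained by contracting all of these arcs, i.e. identifying $((v,i),-)$ with $((va_i,i),+)$ for all $v,i$, keeping the remaining arcs $((v,i),-)\to((v,j),+)$ ($i\neq j$) between the resulting vertices. Each reachability class of $M(n,k)$ is a copy of the complement of a perfect matching on $2n$ vertices. *)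

(* Defs.v *)
From Stdlib Require Import Relations List.
From mathcomp Require Import all_boot.
Set Implicit Arguments. Unset Strict Implicit. Unset Printing Implicit Defensive.

Section Digraph.
Variables (V : Type) (arc : V -> V -> Prop).

Definition und_adj (x y : V) : Prop := arc x y \/ arc y x.

Definition finite_vset (A : V -> Prop) : Prop :=
  exists s : list V, forall x, A x <-> List.In x s.

Definition connected_induced (A : V -> Prop) : Prop :=
  forall x y, A x -> A y ->
    clos_refl_trans V (fun u v => A u /\ A v /\ und_adj u v) x y.

Definition induced_iso (A B : V -> Prop) (f : V -> V) : Prop :=
  [/\ (forall x y, A x -> A y -> f x = f y -> x = y),
      (forall x, A x -> B (f x)),
      (forall y, B y -> exists2 x, A x & f x = y)
    & (forall x y, A x -> A y -> (arc x y <-> arc (f x) (f y)))].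

Definition automorphism (g : V -> V) : Prop :=
  bijective g /\ (forall x y, arc x y <-> arc (g x) (g y)).

Definition connected_homogeneous : Prop :=
  forall (A B : V -> Prop) (f : V -> V),
    finite_vset A -> finite_vset B ->
    connected_induced A -> connected_induced B ->
    induced_iso A B f ->
    exists g : V -> V, automorphism g /\ (forall x, A x -> g x = f x).
End Digraph.

(* Elements of F are reduced words a_{i_1}^{e_1} ... a_{i_m}^{e_m} with 0 < e_t < k and
   i_t <> i_{t+1}.  We store a word as the list of its letters (i_t, e_t) in REVERSE order
   (head of the list = rightmost letter), which makes right multiplication easy. *)
Definition fp_reduced (n k : nat) (w : seq ('I_n * nat)) : bool :=
  all (fun l => (0 < l.2) && (l.2 < k)) w && sorted (fun a b => a.1 != b.1) w.

(* right multiplication by a_j^{-1} = a_j^{k-1}, on reverse-order reduced words *)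
Definition fp_mul_ainv (n k : nat) (j : 'I_n) (w : seq ('I_n * nat)) : seq ('I_n * nat) :=
  match w with
  | (i, e) :: w' =>
      if i == j then (if e == 1 then w' else (i, e.-1) :: w')
      else (j, k.-1) :: w
  | [::] => [:: (j, k.-1)]
  end.

(* After contracting the cycle arcs ((v,i),-) -> ((v a_i,i),+) of T* (x) K_2, each vertex
   of M(n,k) is the class {((v,i),-), ((v a_i,i),+)}, which we label by (v,i) in F x [n].
   The remaining arcs ((v,i),-) -> ((v,j),+), i <> j, become (v,i) -> (v a_j^{-1}, j). *)
Definition M_vertex (n k : nat) : Type :=
  {x : seq ('I_n * nat) * 'I_n | fp_reduced k x.1}.

Definition M_arc (n k : nat) (x y : M_vertex n k) : Prop :=
  (sval x).2 != (sval y).2 /\ (sval y).1 = fp_mul_ainv k (sval y).2 (sval x).1.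

(* Main.v *)
Require Import Defs.
From Stdlib Require Import Relations List Classical ClassicalEpsilon.
From mathcomp Require Import all_boot.
Set Implicit Arguments. Unset Strict Implicit. Unset Printing Implicit Defensive.

Section Gen.
Variables (V : Type) (arc : V -> V -> Prop).
Notation aut := (automorphism arc).
Notation crt := (clos_refl_trans V).
Definition RA (C : V -> Prop) := fun u v => C u /\ C v /\ und_adj arc u v.

Lemma aut_id : aut id.
Proof. split; first by exists id. by []. Qed.

Lemma aut_comp g h : aut g -> aut h -> aut (g \o h).
Proof.
move=> [bg ag] [bh ah]; split; first exact: bij_comp.
by move=> x y /=; rewrite -ag -ah.
Qed.

Lemma aut_inv g : aut g -> exists g', [/\ aut g', cancel g g' & cancel g' g].
Proof.
move=> [[g' c1 c2] ag]; exists g'; split => //; split.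
  by exists g.
by move=> x y; rewrite (ag (g' x)) !c2.
Qed.

Lemma aut_inj g : aut g -> injective g.
Proof. by move=> [bg _]; apply: bij_inj. Qed.

Lemma aut_adj g x y : aut g -> und_adj arc x y -> und_adj arc (g x) (g y).
Proof. by rewrite /und_adj => -[_ ag] [h|h]; [left|right]; apply: (proj1 (ag _ _) h). Qed.

Lemma crt_mono (R R' : relation V) x y :
  (forall u v, R u v -> R' u v) -> crt R x y -> crt R' x y.
Proof.
move=> hR; elim=> [u v /hR|u|u v w _ h1 _ h2]; [exact: rt_step|exact: rt_refl|].
exact: rt_trans h1 h2.
Qed.

Hypothesis trans : forall a b : V, exists g, aut g /\ g a = b.
Hypothesis onept : forall (C : V -> Prop) c x x', C c ->
  (forall y, C y -> crt (RA C) c y) -> ~ C x -> ~ C x' -> x <> x' ->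
  und_adj arc c x ->
  (forall a, C a -> (arc a x <-> arc a x') /\ (arc x a <-> arc x' a)) ->
  exists h, [/\ aut h, (forall a, C a -> h a = a) & h x = x'].

Inductive chain (A : V -> Prop) : list V -> Prop :=
| ch1 a : A a -> chain A [:: a]
| chS x o y : chain A o -> A x -> List.In y o -> und_adj arc x y -> chain A (x :: o).

Lemma chain_in A o z : chain A o -> List.In z o -> A z.
Proof.
elim=> [a Aa|x o' y _ IH Ax _ _] /=; first by case=> // <-.
by case=> [<-|/IH].
Qed.

Lemma chain_conn A o : chain A o -> forall y z, List.In y o -> List.In z o ->
  crt (RA (fun u => List.In u o)) y z.
Proof.
elim=> [a _|x o' y0 _ IH _ iy0 adj] y z.
  by move=> [<-|[]] [<-|[]]; apply: rt_refl.
have lift u v : List.In u o' -> List.In v o' -> crt (RA (fun u => List.In u (x :: o'))) u v.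
  move=> hu hv; apply: crt_mono (IH _ _ hu hv) => a b [ha [hb hab]].
  by split; [right|split; [right|]].
have st : RA (fun u => List.In u (x :: o')) x y0.
  by split; [left|split; [right|]].
have st' : RA (fun u => List.In u (x :: o')) y0 x.
  split; [right|split; [left|]] => //; by case: adj; [right|left].
move=> [<-|hy] [<-|hz].
- exact: rt_refl.
- exact: rt_trans (rt_step _ _ _ _ st) (lift _ _ iy0 hz).
- exact: rt_trans (lift _ _ hy iy0) (rt_step _ _ _ _ st').
- exact: lift.
Qed.

Section Ext.
Variables (A : V -> Prop) (f : V -> V).
Hypothesis finj : forall x y, A x -> A y -> f x = f y -> x = y.
Hypothesis farc : forall x y, A x -> A y -> (arc x y <-> arc (f x) (f y)).

Lemma chain_good o : chain A o -> exists g, aut g /\ forall z, List.In z o -> g z = f z.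
Proof.
elim => [a Aa|x o1 y cho [g [ag hg]] Ax iy adj].
  have [g [ag ga]] := trans a (f a); exists g; split => // z [<-|[]] //.
have [g' [ag' c1 c2]] := aut_inv ag.
case: (classic (List.In x o1)) => xo.
  by exists g; split => // z [<-|/hg] //; apply: hg.
set x' := g' (f x).
case: (classic (x = x')) => xx.
  exists g; split => // z [<-|/hg] //; by rewrite {1}xx /x' c2.
have Ao z : List.In z o1 -> A z := chain_in cho.
have x'o : ~ List.In x' o1.
  move=> h; apply: xx; apply: finj => //; first exact: Ao.
  by rewrite -(hg _ h) /x' c2.
have conn := chain_conn cho.
have same : forall a, List.In a o1 -> (arc a x <-> arc a x') /\ (arc x a <-> arc x' a).
  move=> a ha; have [_ ag1] := ag.
  have Aa := Ao _ ha.
  split.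
    by rewrite (farc Aa Ax) -(hg _ ha) -{1}(c2 (f x)) -ag1.
  by rewrite (farc Ax Aa) -(hg _ ha) -{1}(c2 (f x)) -ag1.
have adj' : und_adj arc y x by case: adj; [right|left].
have [h [ah hfix hx]] := onept iy (fun z hz => conn y z iy hz) xo x'o xx adj' same.
exists (g \o h); split; first exact: aut_comp.
move=> z [<-|hz] /=; first by rewrite hx /x' c2.
by rewrite hfix // hg.
Qed.
End Ext.

Definition inb (o : list V) (z : V) : bool :=
  if excluded_middle_informative (List.In z o) then true else false.

Lemma inbP o z : inb o z = true <-> List.In z o.
Proof. by rewrite /inb; case: excluded_middle_informative. Qed.

Lemma count_lt (p q : pred V) s z : (forall x, p x -> q x) -> List.In z s -> q z -> ~~ p z ->
  count p s < count q s.
Proof.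
move=> pq; elim: s => [|a s IH] //= [<-|hz] qz pz.
  rewrite (negbTE pz) qz add0n add1n ltnS.
  by apply: sub_count => x /pq.
rewrite -addnS; apply: leq_add; last exact: IH.
by case: (p a) (pq a) => // ->.
Qed.

Lemma exit_lemma (A : V -> Prop) o u z :
  crt (fun u v => A u /\ A v /\ und_adj arc u v) u z -> List.In u o -> ~ List.In z o ->
  exists u' z', [/\ List.In u' o, ~ List.In z' o, A z' & und_adj arc z' u'].
Proof.
move/clos_rt_rt1n_iff; elim=> [a|a b c [Aa [Ab ab]] _ IH] ha hc; first by [].
case: (classic (List.In b o)) => hb; first exact: IH.
exists a, b; split => //; by case: ab; [right|left].
Qed.

Lemma cover (A : V -> Prop) s : (forall x, A x <-> List.In x s) -> connected_induced arc A ->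
  forall N o, chain A o -> count (fun z => ~~ inb o z) s <= N ->
  exists o', chain A o' /\ forall z, A z -> List.In z o'.
Proof.
move=> hs hc; elim=> [|N IH] o cho hN;
  (case: (classic (exists z, A z /\ ~ List.In z o)) => [[z [Az zo]]|none];
   [|exists o; split => // z Az; apply: NNPP => zo; apply: none; by exists z]).
all: have [u0 u0o] : exists u, List.In u o by case: cho => [a _|x o1 y _ _ _ _]; exists a || exists x; left.
all: have [u' [z' [u'o z'o Az' adj]]] := exit_lemma (hc _ _ (chain_in cho u0o) Az) u0o zo.
all: have ch' : chain A (z' :: o) by apply: chS adj.
all: have lt : count (fun z => ~~ inb (z' :: o) z) s < count (fun z => ~~ inb o z) s.
all: try (apply: (count_lt (z := z'));
  [by move=> x /negP hx; apply/negP => /inbP h; apply: hx; apply/inbP; right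
  |by apply/hs
  |by apply/negP => /inbP
  |by apply/negPn/inbP; left]).
  by move: (leq_trans lt hN).
apply: (IH _ ch'); by rewrite -ltnS (leq_trans lt hN).
Qed.

Theorem gen_main : connected_homogeneous arc.
Proof.
move=> A B f [s hs] _ hc _ [finj _ _ farc].
case: s hs => [|a s] hs.
  exists id; split; first exact: aut_id.
  by move=> x /hs.
have Aa : A a by apply/hs; left.
have [o [cho cov]] := cover hs hc (ch1 Aa) (leqnn _).
have [g [ag hg]] := chain_good finj farc cho.
by exists g; split => // x /cov /hg.
Qed.

End Gen.

Section Words.
Variables (n k : nat).
Hypothesis hk : 2 <= k.
Notation word := (seq ('I_n * nat)).
Notation red := (@fp_reduced n k).
Notation ainv := (@fp_mul_ainv n k).

Definition mula (j : 'I_n) (w : word) : word :=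
  match w with
  | (i, e) :: w' => if i == j then (if e.+1 == k then w' else (i, e.+1) :: w')
                    else (j, 1) :: w
  | [::] => [:: (j, 1)]
  end.

Definition lm j (w : word) : word := rev (mula j (rev w)).
Definition lmi j (w : word) : word := rev (ainv j (rev w)).

Lemma k1 : 0 < k.-1. Proof. by case: k hk => [|[|m]]. Qed.
Lemma k2 : k.-1 < k. Proof. by case: k hk => [|[|m]]. Qed.
Lemma k3 : k.-1.+1 = k. Proof. by case: k hk => [|[|m]]. Qed.

Lemma red_cons x w : red (x :: w) =
  [&& 0 < x.2, x.2 < k, red w & (if w is y :: _ then x.1 != y.1 else true)].
Proof.
rewrite /fp_reduced /=; case: w => [|y w] /=; rewrite ?andbT.
  by [].
by rewrite -!andbA; do !bool_congr.
Qed.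

Lemma red_nil : red [::]. Proof. by []. Qed.

Lemma red_ainv j w : red w -> red (ainv j w).
Proof.
case: w => [|[i e] w] /=.
  by move=> _; rewrite /fp_reduced /= !andbT k1 k2.
rewrite red_cons /= => /and4P [e0 ek rw hd].
case: eqP => [_|/eqP ij].
  case: eqP => [e1|/eqP e1]; first by [].
  rewrite red_cons /= rw hd; apply/and3P; split => //.
    by case: e e0 e1 {ek} => [|[|e]].
  by apply: leq_ltn_trans ek; apply: leq_pred.
rewrite red_cons red_cons /= rw hd e0 ek /= eq_sym ij andbT.
by rewrite k1 k2.
Qed.

Lemma red_mula j w : red w -> red (mula j w).
Proof.
case: w => [|[i e] w] /=.
  by move=> _; rewrite /fp_reduced /= !andbT.
rewrite red_cons /= => /and4P [e0 ek rw hd].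
case: eqP => [_|/eqP ij].
  case: eqP => [e1|/eqP e1]; first by [].
  rewrite red_cons /= rw hd andbT; apply/andP; split => //.
  by rewrite ltn_neqAle e1 ek.
rewrite red_cons red_cons /= rw hd e0 ek /= eq_sym ij andbT.
by have := hk; case: (k) => [|[|]].
Qed.

Lemma ainvK j w : red w -> mula j (ainv j w) = w.
Proof.
case: w => [|[i e] w] /=.
  by rewrite eqxx k3 eqxx.
rewrite red_cons /= => /and4P [e0 ek rw hd].
case: (eqVneq i j) => [eij|ij].
  subst i.
  case: eqP => [e1|/eqP e1].
    subst e. case: w rw hd => [|[i' e'] w] //= _ hd.
    by rewrite eq_sym (negbTE hd).
  by rewrite /= eqxx (prednK e0) (ltn_eqF ek).
by rewrite /= eqxx k3 eqxx.
Qed.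

Lemma mulaK j w : red w -> ainv j (mula j w) = w.
Proof.
case: w => [|[i e] w] /=.
  by rewrite eqxx.
rewrite red_cons /= => /and4P [e0 ek rw hd].
case: (eqVneq i j) => [eij|ij].
  subst i.
  case: eqP => [e1|/eqP e1].
    case: w rw hd => [|[i' e'] w] /= rw hd.
      by move: e1 e0 ek => <-.
    by rewrite eq_sym (negbTE hd) -e1.
  by rewrite /= eqxx; case: (e) e0.

by rewrite /= eqxx.
Qed.


Lemma red_rev w : red (rev w) = red w.
Proof.
rewrite /fp_reduced all_rev rev_sorted; congr andb.
case: w => [|x w] //=; apply: eq_path => a b /=; by rewrite eq_sym.
Qed.

Lemma mula_cat j s t : s != [::] -> mula j (s ++ t) = mula j s ++ t.
Proof. by case: s => [|[i e] s] //= _; case: ifP => //; case: ifP. Qed.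

Lemma ainv_cat j s t : s != [::] -> ainv j (s ++ t) = ainv j s ++ t.
Proof. by case: s => [|[i e] s] //= _; case: ifP => //; case: ifP. Qed.

Lemma ainv_cons l x s : ainv l (x :: s) = ainv l [:: x] ++ s.
Proof. by rewrite -cat1s ainv_cat. Qed.

Lemma lm_cons j x r : r != [::] -> lm j (x :: r) = x :: lm j r.
Proof.
move=> r0; rewrite /lm rev_cons -cats1 mula_cat ?rev_cat //.
by rewrite -size_eq0 size_rev size_eq0.
Qed.

Lemma lm_cat j p r : r != [::] -> lm j (p ++ r) = p ++ lm j r.
Proof.
move=> r0; elim: p => [|x p IH] //=.
rewrite lm_cons ?IH //; by case: p {IH} => //.
Qed.

Lemma lm_ainv j l w : red w -> lm j (ainv l w) = ainv l (lm j w).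
Proof.
case: w => [|x [|y r]].
- move=> _; rewrite /lm /= k3 eqxx eq_sym.
  by case: eqP.
- case: x => i e; rewrite red_cons /= => /and3P [e0 ek _].
  case: (eqVneq i l) => [eil|il].
    subst l; rewrite ?eqxx /lm /=.
    case: (eqVneq i j) => [eij|ij].
      subst j; rewrite ?eqxx.
      case: (eqVneq e 1) => [e1|en1].
        subst e => /=; rewrite ?eqxx; case: eqP => [k2'|] /=; first by rewrite ?eqxx -k2'.
        by rewrite ?eqxx.
      rewrite /= ?eqxx (prednK e0) (ltn_eqF ek) /=.
      case: eqP => [ke|_] /=; first by rewrite ?eqxx -ke.
      by rewrite ?eqxx; case: (e) e0 en1 => [|[|]].
    rewrite /= ?(negbTE ij) 1?eq_sym ?(negbTE ij) ?eqxx.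
    by case: eqP => [_|_] /=; rewrite ?(negbTE ij).
  rewrite ?(negbTE il) lm_cons //.
  rewrite /lm /=; case: (eqVneq i j) => [eij|ij].
    subst j; case: eqP => _ /=; first by rewrite ?eqxx.
    by rewrite ?(negbTE il).
  by rewrite /= ?(negbTE il).
- move=> _; rewrite ainv_cons lm_cat // (lm_cons j x) // (ainv_cons l x (lm j (y :: r))).
by []. Qed.

Lemma red_lm j w : red w -> red (lm j w).
Proof. by move=> h; rewrite /lm red_rev red_mula // red_rev. Qed.

Lemma red_lmi j w : red w -> red (lmi j w).
Proof. by move=> h; rewrite /lmi red_rev red_ainv // red_rev. Qed.

Lemma lmK j w : red w -> lmi j (lm j w) = w.
Proof. by move=> h; rewrite /lm /lmi revK mulaK ?revK ?red_rev. Qed.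

Lemma lmiK j w : red w -> lm j (lmi j w) = w.
Proof. by move=> h; rewrite /lm /lmi revK ainvK ?revK ?red_rev. Qed.

Lemma lmi_ainv j l w : red w -> lmi j (ainv l w) = ainv l (lmi j w).
Proof.
move=> h; have hu := red_lmi j h.
by rewrite -{1}(lmiK j h) -lm_ainv // lmK // red_ainv.
Qed.

Definition wt (w : word) := sumn (map snd w).

Lemma wt_lmi u j e : red (rcons u (j, e)) -> wt (lmi j (rcons u (j, e))) < wt (rcons u (j, e)).
Proof.
rewrite -red_rev rev_rcons red_cons /= => /and4P [e0 _ _ _].
rewrite /lmi rev_rcons /= eqxx /wt.
have wr s : sumn (map snd (rev s)) = sumn (map snd s) by rewrite map_rev sumn_rev.
rewrite -cats1 map_cat sumn_cat /= addn0.
case: eqP => [->|_]; rewrite ?revK ?addn1 //.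
by rewrite rev_cons -cats1 map_cat sumn_cat /= revK addn0 ltn_add2l prednK // ltnSn.
Qed.

Definition relabel (f : 'I_n -> 'I_n) (w : word) : word := map (fun x => (f x.1, x.2)) w.

Lemma red_relabel f w : injective f -> red (relabel f w) = red w.
Proof.
move=> fi; rewrite /fp_reduced /relabel all_map; congr andb.
case: w => [|x w] //=; rewrite path_map; apply: eq_path => a b /=.
by rewrite inj_eq.
Qed.

Lemma ainv_relabel f l w : injective f -> ainv (f l) (relabel f w) = relabel f (ainv l w).
Proof.
move=> fi; case: w => [|[i e] w] //=.
rewrite inj_eq //; case: eqP => _ //; by case: eqP.
Qed.

Definition ins (j j' : 'I_n) (w : word) : bool :=
  match rev w with [::] => true | y :: _ => (y.1 == j) || (y.1 == j') end.

Lemma ainv_nil l w : ainv l w = [::] -> w = [:: (l, 1)].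
Proof.
case: w => [|[i e] w] //=; case: eqP => [->|_] //; case: eqP => [->|_] //.
by move=> ->.
Qed.

Lemma ins_ainv j j' l w : w != [::] -> ainv l w != [::] -> ins j j' (ainv l w) = ins j j' w.
Proof.
case: w => [|x [|y r]] // _.
- case: x => i e /= h; rewrite /ins /=.
  by move: h; case: (i == l) => //=; case: (e == 1).
- rewrite (ainv_cons l x) => _; rewrite /ins rev_cat.
  have -> : rev (x :: y :: r) = rev (y :: r) ++ [:: x] by rewrite rev_cons cats1.
  case E: (rev (y :: r)) => [|z t] //.
  by move/(congr1 size): E; rewrite size_rev.
Qed.

Lemma ainv_single i u : red u -> ainv i u = [:: (i, k.-1)] -> u = [::].
Proof.
case: u => [|[i' e] u] //; rewrite red_cons /= => /and4P [e0 ek _ hd].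
case: eqP => [eq|_]; last by case.
subst i'; case: eqP => [_ eu|_ [] ek']; last first.
  by move: ek; rewrite -(prednK e0) ek' k3 ltnn.
by subst u; rewrite /= eqxx in hd.
Qed.


Notation V := (M_vertex n k).
Notation arc := (@M_arc n k).
Notation aut := (automorphism arc).

Lemma vinj (x y : V) : sval x = sval y -> x = y.
Proof. by move=> h; apply: val_inj. Qed.

Definition vlift (G : word * 'I_n -> word * 'I_n) (hG : forall p, red p.1 -> red (G p).1) : V -> V :=
  fun x => exist _ (G (sval x)) (hG _ (svalP x)).

Definition P_arc (G : word * 'I_n -> word * 'I_n) := forall p q, red p.1 -> red q.1 ->
  p.2 != q.2 -> q.1 = ainv q.2 p.1 -> (G p).2 != (G q).2 /\ (G q).1 = ainv (G q).2 (G p).1.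

Lemma vlift_arc G hG : P_arc G -> forall x y, arc x y -> arc (@vlift G hG x) (vlift hG y).
Proof.
move=> hP [p hp] [q hq]; rewrite /M_arc /= => -[h1 h2].
exact: hP.
Qed.

Lemma mk_aut (g g' : V -> V) : cancel g g' -> cancel g' g ->
  (forall x y, arc x y -> arc (g x) (g y)) -> (forall x y, arc x y -> arc (g' x) (g' y)) -> aut g.
Proof.
move=> c1 c2 a1 a2; split; first by exists g'.
move=> x y; split; first exact: a1.
by move=> /a2; rewrite !c1.
Qed.

Definition Glm j (p : word * 'I_n) := (lm j p.1, p.2).
Definition Glmi j (p : word * 'I_n) := (lmi j p.1, p.2).
Lemma hGlm j p : red p.1 -> red (Glm j p).1. Proof. exact: red_lm. Qed.
Lemma hGlmi j p : red p.1 -> red (Glmi j p).1. Proof. exact: red_lmi. Qed.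
Definition Vlm j := vlift (hGlm j).
Definition Vlmi j := vlift (hGlmi j).

Lemma Vlm_aut j : aut (Vlm j).
Proof.
apply: (@mk_aut _ (Vlmi j)).
- by move=> [[w i] h]; apply: vinj; rewrite /= /Glm /Glmi /= lmK.
- by move=> [[w i] h]; apply: vinj; rewrite /= /Glm /Glmi /= lmiK.
- apply: vlift_arc => [[w i] [u l]] /= hw hu il ->; split => //; exact: lm_ainv.
- apply: vlift_arc => [[w i] [u l]] /= hw hu il ->; split => //; exact: lmi_ainv.
Qed.

Lemma Vlmi_aut j : aut (Vlmi j).
Proof.
apply: (@mk_aut _ (Vlm j)).
- by move=> [[w i] h]; apply: vinj; rewrite /= /Glm /Glmi /= lmiK.
- by move=> [[w i] h]; apply: vinj; rewrite /= /Glm /Glmi /= lmK.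
- apply: vlift_arc => [[w i] [u l]] /= hw hu il ->; split => //; exact: lmi_ainv.
- apply: vlift_arc => [[w i] [u l]] /= hw hu il ->; split => //; exact: lm_ainv.
Qed.

Lemma peel_gen N : forall v, red v -> wt v <= N -> exists phi (psi : word -> word),
  [/\ aut phi, psi v = [::] & forall x, sval (phi x) = (psi (sval x).1, (sval x).2)].
Proof.
elim: N => [|N IH] v rv hN.
all: case/lastP: v rv hN => [|u [j e]] rv hN.
all: try by exists id, id; split => //; [exact: aut_id|by move=> [[w i] h]].
  by have := leq_trans (wt_lmi rv) hN.
have rv' := red_lmi j rv.
have [phi [psi [aphi hpsi hphi]]] := IH _ rv' (leq_trans (wt_lmi rv) hN).
exists (phi \o Vlmi j), (psi \o lmi j); split => //.
  exact: aut_comp aphi (Vlmi_aut j).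
by move=> [[w i] h] /=; rewrite hphi.
Qed.

Lemma peel v : red v -> exists phi, [/\ aut phi, forall x, (sval (phi x)).2 = (sval x).2 &
  forall x, (sval x).1 = v -> (sval (phi x)).1 = [::]].
Proof.
move=> rv; have [phi [psi [aphi hpsi hphi]]] := peel_gen rv (leqnn _).
exists phi; split => // x; rewrite hphi //=; by move=> ->.
Qed.



Section Swap.
Variables j j' : 'I_n.
Definition tau (l : 'I_n) := if l == j then j' else if l == j' then j else l.

Lemma tauK : involutive tau.
Proof.
move=> l; rewrite /tau.
case: (eqVneq l j) => [->|lj]; first by rewrite eqxx; case: eqP.
case: (eqVneq l j') => [->|lj']; first by rewrite eqxx.
by rewrite (negbTE lj) (negbTE lj').
Qed.

Lemma tau_inj : injective tau.
Proof. exact: inv_inj tauK. Qed.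

Lemma tau_in y : (tau y == j) || (tau y == j') = (y == j) || (y == j').
Proof.
rewrite /tau; case: ifP => [/eqP->|yj]; first by rewrite !eqxx !orbT.
by case: ifP => [_|yj']; [rewrite !eqxx | rewrite yj yj'].
Qed.

Lemma tau_out y : ~~ ((y == j) || (y == j')) -> tau y = y.
Proof. by rewrite /tau negb_or => /andP [/negbTE -> /negbTE ->]. Qed.

Lemma ins_tau w : ins j j' (relabel tau w) = ins j j' w.
Proof. by rewrite /ins /relabel -map_rev; case: (rev w) => [|y t] //=; rewrite tau_in. Qed.

Definition GR (p : word * 'I_n) := if ins j j' p.1 then (relabel tau p.1, tau p.2) else p.

Lemma hGR p : red p.1 -> red (GR p).1.
Proof. by rewrite /GR; case: ifP => //= _; rewrite red_relabel //; exact: tau_inj. Qed.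

Lemma GRK p : GR (GR p) = p.
Proof.
case: p => w i; rewrite /GR /=; case: (boolP (ins j j' w)) => h /=; last by rewrite (negbTE h).
rewrite ins_tau h /= tauK /relabel -map_comp map_id_in //.
by move=> [a b] _ /=; rewrite tauK.
Qed.

Definition VR := vlift hGR.

Lemma GR_arc : P_arc GR.
Proof.
move=> [w i] [u l] /= rw ru il hu.
rewrite /GR /=.
case: (boolP (ins j j' w)) => iw; case: (boolP (ins j j' u)) => iu /=.
- split; first by rewrite (inj_eq tau_inj).
  by rewrite hu ainv_relabel //; exact: tau_inj.
-
  case: w rw iw hu => [|x w] rw iw hu.
    move: hu iu => -> /=; rewrite /ins /= => hl.
    split => //.
    by rewrite -(tau_out hl) (inj_eq tau_inj).
  case: (eqVneq u [::]) => u0; first by rewrite u0 in iu.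
  have := @ins_ainv j j' l (x :: w) isT; rewrite -hu iw => /(_ u0) h.
  by rewrite h in iu.
- case: (eqVneq u [::]) => u0.
    move: hu; rewrite u0 => /esym /ainv_nil hw.
    move: iw; rewrite hw /ins /= => hl.
    by rewrite (tau_out hl) eqxx.
  case: (eqVneq w [::]) => w0; first by move: iw; rewrite w0.
  have := @ins_ainv j j' l w w0; rewrite -hu (negbTE iw) => /(_ u0) h.
  by rewrite h in iu.
- by [].
Qed.

Lemma VR_aut : aut VR.
Proof.
apply: (@mk_aut _ VR).
- by move=> [p h]; apply: vinj; rewrite /= GRK.
- by move=> [p h]; apply: vinj; rewrite /= GRK.
- exact: vlift_arc GR_arc.
- exact: vlift_arc GR_arc.
Qed.

Definition inI (p : word * 'I_n) :=
  if p.1 is [::] then (p.2 == j) || (p.2 == j') else ins j j' p.1.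

Lemma GR_fix p : ~~ inI p -> GR p = p.
Proof.
case: p => [[|x w] i]; rewrite /inI /GR /= => h.
  by rewrite /ins /= (tau_out h).
by rewrite (negbTE h).
Qed.

Definition Bnd (q : word * 'I_n) := q = ([::], j) \/ q = ([::], j') \/
  q = ([:: (j, k.-1)], j) \/ q = ([:: (j', k.-1)], j').

Lemma claim p q : red p.1 -> red q.1 ->
  (p.2 != q.2 /\ q.1 = ainv q.2 p.1 \/ q.2 != p.2 /\ p.1 = ainv p.2 q.1) ->
  ~~ inI p -> inI q -> Bnd q.
Proof.
case: p => w i; case: q => u l /= rw ru.
have nilc (l' : 'I_n) : (l' == j) || (l' == j') -> l' = j \/ l' = j'.
  by case/orP => /eqP ->; [left|right].
case=> [[il hu]|[li hw]]; rewrite /inI /=.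
- case: w rw hu => [|x w] rw hu.
    move=> _; rewrite hu /ins /= => /nilc [] ->; [right; right; left|right; right; right] => //.
  move=> iw; case: u ru hu => [|y u] ru hu.
    by move=> /nilc [] ->; [left|right; left].
  by have := @ins_ainv j j' l (x :: w) isT; rewrite -hu (negbTE iw) => /(_ isT) ->.
- case: u ru hw => [|y u] ru hw.
    by move=> _ /nilc [] ->; [left|right; left].
  move=> iw iu; case: w rw hw iw => [|x w] rw hw iw.
    move: hw => /esym /ainv_nil [hy hu]; subst.
    by move: iu iw; rewrite /ins /= => ->.
  by have := @ins_ainv j j' i (y :: u) isT; rewrite -hw iu => /(_ isT) h; rewrite h in iw.
Qed.

Lemma root (D : V -> Prop) d0 (X X' : V) : j != j' -> D d0 -> ~~ inI (sval d0) ->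
  (forall y, D y -> clos_refl_trans V (RA arc D) d0 y) -> ~ D X -> ~ D X' ->
  (sval X = ([::], j) /\ sval X' = ([::], j') \/
   sval X = ([:: (j, k.-1)], j) /\ sval X' = ([:: (j', k.-1)], j')) ->
  (forall a, D a -> (arc a X <-> arc a X') /\ (arc X a <-> arc X' a)) ->
  forall y, D y -> VR y = y.
Proof.
move=> jj' Dd0 nI conn nX nX' conf same.
have jj'' : j' != j by rewrite eq_sym.
have noB y : D y -> ~ Bnd (sval y).
  move=> Dy hB; have [s1 s2] := same y Dy.
  have yX : sval y <> sval X by move=> e; apply: nX; rewrite -(vinj e).
  have yX' : sval y <> sval X' by move=> e; apply: nX'; rewrite -(vinj e).
  move: s1 s2 yX yX'; rewrite /M_arc.
  case: conf => [[-> ->]|[-> ->]] /=;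
  case: hB => [hy|[hy|[hy|hy]]]; rewrite hy /= => //;
  first [ by move=> _ [_ /(_ (conj jj' erefl))] [] /negP
        | by move=> _ [_ /(_ (conj jj'' erefl))] [] /negP
        | by move=> _ [/(_ (conj jj' erefl))] [] /negP
        | by move=> _ [/(_ (conj jj'' erefl))] [] /negP
        | by move=> [_ /(_ (conj jj' erefl))] [] /negP
        | by move=> [_ /(_ (conj jj'' erefl))] [] /negP
        | by move=> [/(_ (conj jj' erefl))] [] /negP
        | by move=> [/(_ (conj jj'' erefl))] [] /negP
        | idtac ].
have path y : clos_refl_trans V (RA arc D) d0 y -> ~~ inI (sval d0) -> ~~ inI (sval y).
  move/clos_rt_rt1n_iff; elim=> // a b c [Da [Db ab]] _ IH na.
  apply: IH; apply/negP => hb.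
  exact: (noB b Db (claim (svalP a) (svalP b) ab na hb)).
move=> y Dy; apply: vinj => /=; apply: GR_fix.
exact: path (conn y Dy) nI.
Qed.

End Swap.

Lemma map_crt (R R' : relation V) (g : V -> V) u v :
  (forall a b, R a b -> R' (g a) (g b)) -> clos_refl_trans V R u v -> clos_refl_trans V R' (g u) (g v).
Proof.
move=> hR; elim=> [a b /hR|a|a b c _ h1 _ h2]; [exact: rt_step|exact: rt_refl|exact: rt_trans h1 h2].
Qed.

Lemma onept_core (C : V -> Prop) c x x' (phi : V -> V) (j j' : 'I_n) :
  C c -> (forall y, C y -> clos_refl_trans V (RA arc C) c y) -> ~ C x -> ~ C x' ->
  (forall a, C a -> (arc a x <-> arc a x') /\ (arc x a <-> arc x' a)) ->
  aut phi -> j != j' -> ~~ inI j j' (sval (phi c)) ->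
  (sval (phi x) = ([::], j) /\ sval (phi x') = ([::], j') \/
   sval (phi x) = ([:: (j, k.-1)], j) /\ sval (phi x') = ([:: (j', k.-1)], j')) ->
  exists h, [/\ aut h, (forall a, C a -> h a = a) & h x = x'].
Proof.
move=> Cc conn nx nx' same aphi jj' nI conf.
have [phi' [aphi' c1 c2]] := aut_inv aphi.
have [_ ap] := aphi.
pose D y := exists2 a, C a & phi a = y.
have fixD : forall y, D y -> VR j j' y = y.
  apply: (@root j j' D (phi c) (phi x) (phi x')) => //.
  - by exists c.
  - move=> y [a Ca <-]; apply: map_crt (conn a Ca) => u v [Cu [Cv uv]].
    split; [by exists u|split; [by exists v|exact: aut_adj]].
  - by move=> [a Ca /(aut_inj aphi) e]; apply: nx; rewrite -e.
  - by move=> [a Ca /(aut_inj aphi) e]; apply: nx'; rewrite -e.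
  - move=> y [a Ca <-]; have [s1 s2] := same a Ca.
    by rewrite -!ap.
have Rx : VR j j' (phi x) = phi x'.
  apply: vinj => /=; rewrite /GR.
  case: conf => [[-> ->]|[-> ->]] /=.
    by rewrite /tau eqxx.
  by rewrite /ins /= eqxx /relabel /= /tau eqxx.
exists (phi' \o VR j j' \o phi); split.
- apply: aut_comp => //; apply: aut_comp => //; exact: VR_aut.
- by move=> a Ca /=; rewrite fixD ?c1 //; exists a.
- by rewrite /= Rx c1.
Qed.

Lemma onept_M (C : V -> Prop) c x x' : C c ->
  (forall y, C y -> clos_refl_trans V (RA arc C) c y) -> ~ C x -> ~ C x' -> x <> x' ->
  und_adj arc c x ->
  (forall a, C a -> (arc a x <-> arc a x') /\ (arc x a <-> arc x' a)) ->
  exists h, [/\ aut h, (forall a, C a -> h a = a) & h x = x'].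
Proof.
move=> Cc conn nx nx' xx' adj same.
have [s1 s2] := same c Cc.
case: adj => hcx.
- have hcx' := proj1 s1 hcx.
  have [phi [aphi col hpc]] := peel (svalP c).
  have pc := hpc c erefl.
  have [_ ap] := aphi.
  have ax := proj1 (ap _ _) hcx; have ax' := proj1 (ap _ _) hcx'.
  move: ax ax'; rewrite /M_arc pc.
  case Ex: (sval (phi x)) => [u j]; case Ex': (sval (phi x')) => [u' j'] /=.
  case Ec: (sval (phi c)) pc => [v i] /= v0 [cj eu] [cj' eu'].
  apply: (@onept_core C c x x' phi j j') => //.
  + apply/negP => /eqP e; apply: xx'; apply: (aut_inj aphi); apply: vinj.
    by rewrite Ex Ex' eu eu' e.
  + by rewrite Ec v0 /inI /= negb_or cj cj'.
  + by right; rewrite Ex Ex' eu eu'.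
- have hcx' := proj1 s2 hcx.
  have [phi [aphi col hpc]] := peel (svalP x).
  have px := hpc x erefl.
  have [_ ap] := aphi.
  have ax := proj1 (ap _ _) hcx; have ax' := proj1 (ap _ _) hcx'.
  move: ax ax'; rewrite /M_arc px.
  case Ex: (sval (phi x)) px => [u j] /= u0.
  case Ex': (sval (phi x')) => [u' j'].
  case Ec: (sval (phi c)) => [v i] /= [ji ev] [ji' hv].
  have ru' : red u' by have := svalP (phi x'); rewrite Ex'.
  have u'0 : u' = [::] by apply: (@ainv_single i u' ru'); rewrite -hv ev.
  apply: (@onept_core C c x x' phi j j') => //.
  + apply/negP => /eqP e; apply: xx'; apply: (aut_inj aphi); apply: vinj.
    by rewrite Ex Ex' u0 u'0 e.
  + by rewrite Ec ev /inI /= /ins /= negb_or !(eq_sym i) ji ji'.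
  + by left; rewrite Ex Ex' u0 u'0.
Qed.

Lemma trans_M (a b : V) : exists g, aut g /\ g a = b.
Proof.
have [pa [apa cola hpa]] := peel (svalP a).
have [pb [apb colb hpb]] := peel (svalP b).
have [pb' [apb' c1 c2]] := aut_inv apb.
have ea := hpa a erefl; have eb := hpb b erefl.
case: (eqVneq (sval a).2 (sval b).2) => e.
  exists (pb' \o pa); split; first exact: aut_comp.
  rewrite /= -(c1 b); congr pb'; apply: vinj.
  by rewrite (surjective_pairing (sval (pa a))) (surjective_pairing (sval (pb b))) ea eb cola colb e.
exists (pb' \o VR (sval a).2 (sval b).2 \o pa); split.
  apply: aut_comp => //; apply: aut_comp => //; exact: VR_aut.
rewrite /= -(c1 b); congr pb'; apply: vinj.
rewrite /= /GR (surjective_pairing (sval (pa a))) (surjective_pairing (sval (pb b))) ea eb cola colb /=.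
by rewrite c1 /tau eqxx.
Qed.

End Words.

Theorem proposition5p3 (n k : nat) (hn : 3 <= n) (hk : 2 <= k) :
  connected_homogeneous (@M_arc n k).
Proof.
apply: gen_main.
- exact: trans_M.
- exact: onept_M.
Qed.
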